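(* Let $q$ be a nonzero complex number with $q^4\neq1$, let $\zeta,\zeta',\zeta''$ be nonzero complex numbers different from $\pm1$, and let $a,b,c,d,e,f\in\mathbb{C}$ satisfy $ade=bcf$. For $\alpha,\beta\in\mathbb{C}$ put $R(\sigma,\tau,\alpha,\beta):=\alpha R_{\sigma,\tau}+\beta R'_{\sigma,\tau}$. Then, as maps $V(\zeta)\otimes V(\zeta')\otimes V(\zeta'')\to V(\zeta'')\otimes V(\zeta')\otimes V(\zeta)$, \[\bigl(R(\zeta',\zeta'',a,b)\otimes I_{V(\zeta)}\bigr)\bigl(I_{V(\zeta')}\otimes R(\zeta,\zeta'',c,d)\bigr)\bigl(R(\zeta,\zeta',e,f)\otimes I_{V(\zeta'')}\bigr)\] \[=\bigl(I_{V(\zeta'')}\otimes R(\zeta,\zeta',e,f)\bigr)\bigl(R(\zeta,\zeta'',c,d)\otimes I_{V(\zeta')}\bigr)\bigl(I_{V(\zeta)}\otimes R(\zeta',\zeta'',a,b)\bigr).\]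
   Context: $V(\zeta)$ is the two-dimensional super vector space with basis $x$ (even), $y$ (odd), which carries the structure of the Kac module of $U_q(\mathfrak{gl}(1|1))$ (or $U_q(\mathfrak{sl}(1|1))$) with central element $W$ acting by $\zeta$; both sides above are module homomorphisms. For nonzero $\sigma,\tau$, with $x,y$ the basis of $V(\sigma)$ and $\tilde x,\tilde y$ that of $V(\tau)$, the even linear maps $R_{\sigma,\tau},R'_{\sigma,\tau}:V(\sigma)\otimes V(\tau)\to V(\tau)\otimes V(\sigma)$ are \[R_{\sigma,\tau}:\ x\otimes\tilde x\mapsto \tilde x\otimes x,\ x\otimes\tilde y\mapsto \sigma\,\tilde y\otimes x,\ y\otimes\tilde x\mapsto \tau\,\tilde x\otimes y+(1-\sigma^2)\,\tilde y\otimes x,\ y\otimes\tilde y\mapsto-\sigma\tau\,\tilde y\otimes y,\] \[R'_{\sigma,\tau}:\ x\otimes\tilde x\mapsto -\sigma\tau\,\tilde x\otimes x,\ x\otimes\tilde y\mapsto (1-\tau^2)\,\tilde x\otimes y-\tau\,\tilde y\otimes x,\ y\otimes\tilde x\mapsto-\sigma\,\tilde x\otimes y,\ y\otimes\tilde y\mapsto\tilde y\otimes y.\] $I_X$ denotes the identity of $X$. *)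

(* Defs.v *)
From mathcomp Require Import all_boot all_algebra complex Rstruct.
Set Implicit Arguments. Unset Strict Implicit. Unset Printing Implicit Defensive.
Import GRing.Theory Num.Theory.
Local Open Scope ring_scope.


(* Basis of V(zeta): false = x (even), true = y (odd).
   A vector of V(a) (x) V(b) (x) V(c) is its coefficient function on the
   basis tensors e_i (x) e_j (x) e_k; same for two-fold tensors.
   An (even) map V(s)(x)V(t) -> V(t)(x)V(s) is given by its matrix
   coefficients M i j k l = coefficient of (e~_k (x) e_l) in M(e_i (x) e~_j). *)
Definition vec3 := bool -> bool -> bool -> (Rdefinitions.R)[i].
Definition op2 := bool -> bool -> bool -> bool -> (Rdefinitions.R)[i].

Definition Rmat (s t : (Rdefinitions.R)[i]) : op2 := fun i j k l =>
  match i, j, k, l with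
  | false, false, false, false => 1
  | false, true,  true,  false => s
  | true,  false, false, true  => t
  | true,  false, true,  false => 1 - s ^+ 2
  | true,  true,  true,  true  => - (s * t)
  | _, _, _, _ => 0
  end.

Definition Rmat' (s t : (Rdefinitions.R)[i]) : op2 := fun i j k l =>
  match i, j, k, l with
  | false, false, false, false => - (s * t)
  | false, true,  false, true  => 1 - t ^+ 2
  | false, true,  true,  false => - t
  | true,  false, false, true  => - s
  | true,  true,  true,  true  => 1
  | _, _, _, _ => 0
  end.

Definition Rab (s t al be : (Rdefinitions.R)[i]) : op2 :=
  fun i j k l => al * Rmat s t i j k l + be * Rmat' s t i j k l.

(* M (x) I  and  I (x) M  on three-fold tensors.  All maps involved are even,
   so no Koszul signs arise. *)
Definition tensorI (M : op2) (v : vec3) : vec3 := fun k l m =>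
  \sum_(i : bool) \sum_(j : bool) M i j k l * v i j m.
Definition Itensor (M : op2) (v : vec3) : vec3 := fun k l m =>
  \sum_(i : bool) \sum_(j : bool) M i j l m * v k i j.

(* Main.v *)
Require Import Defs.
From mathcomp Require Import all_boot all_algebra complex Rstruct.
From mathcomp Require Import ring.
From Stdlib Require Import FunctionalExtensionality.
Import GRing.Theory Num.Theory.
Local Open Scope ring_scope.

Lemma foo (z z' z'' a b c d e f : (Rdefinitions.R)[i]) :
  a * d * e = b * c * f ->
  forall v : vec3,
    tensorI (Rab z' z'' a b) (Itensor (Rab z z'' c d) (tensorI (Rab z z' e f) v))
    = Itensor (Rab z z' e f) (tensorI (Rab z z'' c d) (Itensor (Rab z' z'' a b) v)).
Proof.
move=> H v.
apply: functional_extensionality => k; apply: functional_extensionality => l; apply: functional_extensionality => m.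
rewrite /tensorI /Itensor /Rab /Rmat /Rmat'.
case: k; case: l; case: m; rewrite !big_bool /=; try ring.
all: have [dE|dn0] := eqVneq d 0; [
  rewrite dE in H *; move/esym/eqP: H; rewrite mulr0 mul0r !mulf_eq0 => /orP[/orP[]|] /eqP ->; ring
 | have [eE|en0] := eqVneq e 0; [
  rewrite eE in H *; move/esym/eqP: H; rewrite mulr0 !mulf_eq0 => /orP[/orP[]|] /eqP ->; ring
 | have Ha : a = b*c*f/(d*e) by rewrite -H; field; rewrite ?dn0 ?en0 //];
  rewrite Ha; field; rewrite ?dn0 ?en0 //].
Qed.

Theorem theorem6p2 (q z z' z'' a b c d e f : (Rdefinitions.R)[i]) :
  q != 0 -> q ^+ 4 != 1 ->
  z != 0 -> z != 1 -> z != -1 ->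
  z' != 0 -> z' != 1 -> z' != -1 ->
  z'' != 0 -> z'' != 1 -> z'' != -1 ->
  a * d * e = b * c * f ->
  forall v : vec3,
    tensorI (Rab z' z'' a b) (Itensor (Rab z z'' c d) (tensorI (Rab z z' e f) v))
    = Itensor (Rab z z' e f) (tensorI (Rab z z'' c d) (Itensor (Rab z' z'' a b) v)).
Proof.
move=> *; exact: foo.
Qed.
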